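(* Let $d\ge3$, $R_d=\{0,1,\dots,d-1\}$, and $r_d:\mathbb{Z}\to R_d$ the remainder modulo $d$. Define $\psi_d:R_d\times R_d\to R_d$, $\psi_d(k,i)=r_d(k+2i)$, and $\varphi_{d,\pm}:R_d\times R_d\to R_d$, $\varphi_{d,\pm}(k,i)=r_d(i\pm k)$. For $u\in R_d$ let $D^s_u=\{L^s_{k,i}\in\mathcal{L}^s: \psi_d(k,i)=u\}$ for $s=1,2$, and $D^0_{u,\pm}=\{L^0_{k,i}\in\mathcal{L}^0:\varphi_{d,\pm}(k,i)=u\}$. Then: (a) for every $i$, the restrictions of $\psi_d$ and of $\varphi_{d,\pm}$ to $R_d\times\{i\}$ are bijections onto $R_d$; (b) for every $k$, the restriction of $\varphi_{d,\pm}$ to $\{k\}\times R_d$ is a bijection onto $R_d$; (c) if $d$ is odd, for every $k$ the restriction of $\psi_d$ to $\{k\}\times R_d$ is a bijection onto $R_d$; (d) $\#\psi_d^{-1}(u)=d$ and $\#\varphi_{d,\pm}^{-1}(u)=d$ for all $u\in R_d$; (e) $D^0_{u,\pm}\subset\mathcal{L}^0$ and $D^s_u\subset\mathcal{L}^s$ ($s=1,2$) are families of $d$ pairwise disjoint lines.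
   Context: ${\rm F}_d\subset\mathbb{P}^3(\mathbb{C})$ is the surface $x^d-y^d-z^d+w^d=0$. Fix a primitive $d$-th root of unity $\eta$ and $v\in\mathbb{C}$ with $v^d=-1$. For $k,i\in R_d$ define the lines $L^0_{k,i}:\{y=\eta^i x,\ w=\eta^k z\}$, $L^1_{k,i}:\{x=\eta^{k+i}z,\ y=\eta^i w\}$, $L^2_{k,i}:\{x=v\eta^i w,\ y=v\eta^{k+i}z\}$, and $\mathcal{L}^s=\{L^s_{k,i}\}_{k,i\in R_d}$. *)

(* Defs.v *)
From HB Require Import structures.
From mathcomp Require Import all_boot all_order all_algebra.
Set Implicit Arguments. Unset Strict Implicit. Unset Printing Implicit Defensive.
Import Order.TTheory GRing.Theory Num.Theory.
Local Open Scope ring_scope.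

(* R_d is modelled by the ordinal type 'I_d = {0,...,d-1}. *)
Lemma ord_pos (d : nat) (k : 'I_d) : (0 < d)%N.
Proof. exact: leq_ltn_trans (leq0n k) (ltn_ord k). Qed.

Definition psi (d : nat) (k i : 'I_d) : 'I_d :=
  Ordinal (ltn_pmod (k + 2 * i)%N (ord_pos k)).
Definition phip (d : nat) (k i : 'I_d) : 'I_d :=
  Ordinal (ltn_pmod (i + k)%N (ord_pos k)).
(* phi_{d,-}(k,i) = r_d(i - k); since 0 <= k < d, r_d(i - k) = r_d(i + (d - k)) *)
Definition phim (d : nat) (k i : 'I_d) : 'I_d :=
  Ordinal (ltn_pmod (i + (d - k))%N (ord_pos k)).

(* A line is given as the predicate on C^4 of its (homogeneous) linear
   equations; a point of P^3 lies on it iff some/any nonzero representative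
   satisfies the equations. *)
Section Lines.
Variable C : numClosedFieldType.

Definition L0 (eta : C) (k i : nat) (x y z w : C) : Prop :=
  y = eta ^+ i * x /\ w = eta ^+ k * z.
Definition L1 (eta : C) (k i : nat) (x y z w : C) : Prop :=
  x = eta ^+ (k + i) * z /\ y = eta ^+ i * w.
Definition L2 (eta v : C) (k i : nat) (x y z w : C) : Prop :=
  x = v * eta ^+ i * w /\ y = v * eta ^+ (k + i) * z.

(* Two lines of P^3 are disjoint iff they have no common point, i.e. no
   common nonzero vector of homogeneous coordinates. *)
Definition disjoint_lines (L L' : C -> C -> C -> C -> Prop) : Prop :=
  forall x y z w, L x y z w -> L' x y z w ->
    x = 0 /\ y = 0 /\ z = 0 /\ w = 0.
End Lines.

(* The family { L_(k,i) : f(k,i) = u } consists of d pairwise disjoint lines: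
   the index set has d elements and lines with distinct indices are disjoint
   (hence also distinct, lines being nonempty). *)
Definition family_of_d_disjoint_lines (C : numClosedFieldType) (d : nat)
    (f : 'I_d -> 'I_d -> 'I_d) (u : 'I_d)
    (L : nat -> nat -> C -> C -> C -> C -> Prop) : Prop :=
  #|[set p : 'I_d * 'I_d | f p.1 p.2 == u]| = d /\
  forall k i k' i' : 'I_d, f k i = u -> f k' i' = u -> (k, i) != (k', i') ->
    disjoint_lines (L k i) (L k' i').

(* Main.v *)
Require Import Defs.
From HB Require Import structures.
From mathcomp Require Import all_boot all_order all_algebra.
Import Order.TTheory GRing.Theory Num.Theory.
Local Open Scope ring_scope.
Set Implicit Arguments. Unset Strict Implicit.

Lemma ord_modeq (d : nat) (a b : 'I_d) : (a == b %[mod d])%N -> a = b.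
Proof. by rewrite !modn_small // => /eqP h; apply: val_inj. Qed.

Lemma bij_of_inj (d : nat) (f : 'I_d -> 'I_d) :
  (forall a b : 'I_d, f a = f b -> (a == b %[mod d])%N) -> bijective f.
Proof. by move=> h; apply: injF_bij => a b /h /ord_modeq. Qed.

Lemma psi_k d (i : 'I_d) : bijective (fun k : 'I_d => psi k i).
Proof. by apply: bij_of_inj => a b /(congr1 val) /= /eqP; rewrite eqn_modDr. Qed.
Lemma phip_k d (i : 'I_d) : bijective (fun k : 'I_d => phip k i).
Proof. by apply: bij_of_inj => a b /(congr1 val) /= /eqP; rewrite eqn_modDl. Qed.
Lemma phip_i d (k : 'I_d) : bijective (fun i : 'I_d => phip k i).
Proof. by apply: bij_of_inj => a b /(congr1 val) /= /eqP; rewrite eqn_modDr. Qed.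
Lemma phim_i d (k : 'I_d) : bijective (fun i : 'I_d => phim k i).
Proof. by apply: bij_of_inj => a b /(congr1 val) /= /eqP; rewrite eqn_modDr. Qed.
Lemma phim_k d (i : 'I_d) : bijective (fun k : 'I_d => phim k i).
Proof.
apply: bij_of_inj => a b /(congr1 val) /= /eqP; rewrite eqn_modDl => h.
have ha := ltn_ord a; have hb := ltn_ord b.
have : ((d - a) + (a + b) == (d - b) + (a + b) %[mod d])%N by rewrite eqn_modDr.
have -> : (d - a + (a + b) = d + b)%N by rewrite addnA subnK ?(ltnW ha).
have -> : (d - b + (a + b) = d + a)%N by rewrite addnCA subnK ?(ltnW hb) // addnC.
by rewrite eqn_modDl eq_sym.
Qed.
Lemma psi_i d (k : 'I_d) : odd d -> bijective (fun i : 'I_d => psi k i).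
Proof.
move=> od; apply: bij_of_inj => a b /(congr1 val) /= /eqP; rewrite eqn_modDl.
wlog ab : a b / (a <= b)%N.
  move=> W; case: (leqP a b) => [|/ltnW] h; first exact: W.
  by move=> e; rewrite eq_sym; apply: W; rewrite // eq_sym.
rewrite eq_sym eqn_mod_dvd ?leq_mul2l // -mulnBr mulnC Gauss_dvdl ?coprimen2 //.
by rewrite eq_sym eqn_mod_dvd.
Qed.

Lemma card_fam d (f : 'I_d -> 'I_d -> 'I_d) u :
  (forall i, bijective (fun k => f k i)) ->
  #|[set p : 'I_d * 'I_d | f p.1 p.2 == u]| = d.
Proof.
move=> hb; rewrite -(card_in_imset (f:=snd)).
- transitivity #|[set: 'I_d]|; last by rewrite cardsT card_ord.
  apply: eq_card => i; rewrite in_setT; apply/imsetP.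
  have [g _ gK] := hb i; exists (g u, i) => //.
  by rewrite inE /= gK.
- move=> [k i] [k' i']; rewrite !inE /= => /eqP h1 /eqP h2 /= ei; subst i'.
  have [g fK _] := hb i.
  by rewrite -[k]fK -[k']fK /= h1 h2.
Qed.

Lemma sep (C : numClosedFieldType) (a b x : C) : a != b -> a * x = b * x -> x = 0.
Proof.
move=> ab /eqP; rewrite -subr_eq0 -mulrBl mulf_eq0 subr_eq0 (negbTE ab) /=.
by move/eqP.
Qed.

Lemma neq_i d (f : 'I_d -> 'I_d -> 'I_d) u (k i k' i' : 'I_d) :
  (forall i, bijective (fun k => f k i)) ->
  f k i = u -> f k' i' = u -> (k, i) != (k', i') -> i != i'.
Proof.
move=> hb h1 h2 ne; apply/eqP => ei; subst i'.
have [g fK _] := hb i; move: ne.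
by rewrite -[k]fK -[k']fK /= h1 h2 eqxx.
Qed.

Lemma neq_k d (f : 'I_d -> 'I_d -> 'I_d) u (k i k' i' : 'I_d) :
  (forall k, bijective (fun i => f k i)) ->
  f k i = u -> f k' i' = u -> (k, i) != (k', i') -> k != k'.
Proof.
move=> hb h1 h2 ne; apply/eqP => ek; subst k'.
have [g fK _] := hb k; move: ne.
by rewrite -[i]fK -[i']fK /= h1 h2 eqxx.
Qed.

Lemma exp_neq (C : numClosedFieldType) d (eta : C) (a b : 'I_d) :
  d.-primitive_root eta -> a != b -> eta ^+ a != eta ^+ b.
Proof.
move=> pr ab; rewrite (eq_prim_root_expr pr); apply: contra ab => /ord_modeq ->.
by [].
Qed.

Lemma psi_sum d (k i k' i' : 'I_d) :
  psi k i = psi k' i' -> i != i' -> ~~ (k + i == k' + i' %[mod d])%N.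
Proof.
move=> /(congr1 val) /= /eqP h ne; apply: contra ne => h2.
apply/eqP/ord_modeq; move: h.
rewrite mul2n -addnn !addnA -modnDml (eqP h2) modnDml -!addnA !eqn_modDl.
by rewrite addn0.
Qed.

Unset Implicit Arguments. Set Strict Implicit.

Theorem proposition2p2 (C : numClosedFieldType) (d : nat) (eta v : C) :
  (3 <= d)%N -> d.-primitive_root eta -> v ^+ d = -1 ->
  (* (a) *)
  (forall i : 'I_d,
     bijective (fun k : 'I_d => psi k i) /\
     bijective (fun k : 'I_d => phip k i) /\
     bijective (fun k : 'I_d => phim k i)) /\
  (* (b) *)
  (forall k : 'I_d,
     bijective (fun i : 'I_d => phip k i) /\
     bijective (fun i : 'I_d => phim k i)) /\
  (* (c) *)
  (odd d -> forall k : 'I_d, bijective (fun i : 'I_d => psi k i)) /\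
  (* (d) *)
  (forall u : 'I_d,
     #|[set p : 'I_d * 'I_d | psi p.1 p.2 == u]| = d /\
     #|[set p : 'I_d * 'I_d | phip p.1 p.2 == u]| = d /\
     #|[set p : 'I_d * 'I_d | phim p.1 p.2 == u]| = d) /\
  (* (e) *)
  (forall u : 'I_d,
     family_of_d_disjoint_lines (@phip d) u (fun k i => @L0 C eta k i) /\
     family_of_d_disjoint_lines (@phim d) u (fun k i => @L0 C eta k i) /\
     family_of_d_disjoint_lines (@psi d) u (fun k i => @L1 C eta k i) /\
     family_of_d_disjoint_lines (@psi d) u (fun k i => @L2 C eta v k i)).
Proof.
move=> d3 pr hv.
have v0 : v != 0.
  apply/eqP => v0; move: hv; rewrite v0 expr0n.
  have -> : (d == 0%N) = false by apply/negbTE; rewrite -lt0n (leq_trans _ d3).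
  by move/eqP; rewrite eq_sym oppr_eq0 oner_eq0.
split; first by move=> i; split; [exact: psi_k|split; [exact: phip_k|exact: phim_k]].
split; first by move=> k; split; [exact: phip_i|exact: phim_i].
split; first by move=> od k; exact: psi_i.
split; first by move=> u; split; [|split]; apply: card_fam;
  [exact: psi_k|exact: phip_k|exact: phim_k].
move=> u; split; [|split; [|split]].
- split; first by apply: card_fam; exact: phip_k.
  move=> k i k' i' h1 h2 ne x y z w [e1 e2] [e3 e4].
  have ni := neq_i (@phip_k d) h1 h2 ne; have nk := neq_k (@phip_i d) h1 h2 ne.
  have x0 : x = 0 by apply: (sep (exp_neq pr ni)); rewrite -e1 -e3.
  have z0 : z = 0 by apply: (sep (exp_neq pr nk)); rewrite -e2 -e4.
  by rewrite e1 e2 x0 z0 !mulr0.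
- split; first by apply: card_fam; exact: phim_k.
  move=> k i k' i' h1 h2 ne x y z w [e1 e2] [e3 e4].
  have ni := neq_i (@phim_k d) h1 h2 ne; have nk := neq_k (@phim_i d) h1 h2 ne.
  have x0 : x = 0 by apply: (sep (exp_neq pr ni)); rewrite -e1 -e3.
  have z0 : z = 0 by apply: (sep (exp_neq pr nk)); rewrite -e2 -e4.
  by rewrite e1 e2 x0 z0 !mulr0.
- split; first by apply: card_fam; exact: psi_k.
  move=> k i k' i' h1 h2 ne x y z w [e1 e2] [e3 e4].
  have ni := neq_i (@psi_k d) h1 h2 ne.
  have ns := psi_sum (etrans h1 (esym h2)) ni.
  have w0 : w = 0 by apply: (sep (exp_neq pr ni)); rewrite -e2 -e4.
  have z0 : z = 0.
    apply: (sep (a := eta ^+ (k + i)) (b := eta ^+ (k' + i'))).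
      by rewrite (eq_prim_root_expr pr).
    by rewrite -e1 -e3.
  by rewrite e1 e2 w0 z0 !mulr0.
- split; first by apply: card_fam; exact: psi_k.
  move=> k i k' i' h1 h2 ne x y z w [e1 e2] [e3 e4].
  have ni := neq_i (@psi_k d) h1 h2 ne.
  have ns := psi_sum (etrans h1 (esym h2)) ni.
  have w0 : w = 0.
    apply: (sep (a := v * eta ^+ i) (b := v * eta ^+ i')).
      by rewrite (inj_eq (mulfI v0)) exp_neq.
    by rewrite -e1 -e3.
  have z0 : z = 0.
    apply: (sep (a := v * eta ^+ (k + i)) (b := v * eta ^+ (k' + i'))).
      by rewrite (inj_eq (mulfI v0)) (eq_prim_root_expr pr).
    by rewrite -e2 -e4.
  by rewrite e1 e2 w0 z0 !mulr0.
Qed.
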